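(* Let $H$ be an inner product space over $\mathbb{K}\in\{\mathbb{R},\mathbb{C}\}$. Let $x,y\in H$ with $x\neq 0$, $y\neq 0$, and let $\delta>0$ be such that $\|x-y\|\le \delta$. (a) If $\|y\|>\delta$, then $$0\le \|x\|^2\|y\|^2-|\langle x,y\rangle|^2\le \|x\|^2\|y\|^2-[\operatorname{Re}\langle x,y\rangle]^2\le \delta^2\|x\|^2 .$$ Moreover, the constant $1$ in front of $\delta^2$ is best possible. That is, for every $k\in(0,1)$ there exist an inner product space $H$, nonzero $x,y\in H$ and $\delta>0$ with $\|x-y\|\le\delta$ and $\|y\|>\delta$ such that $\|x\|^2\|y\|^2-[\operatorname{Re}\langle x,y\rangle]^2> k\,\delta^2\|x\|^2$. (b) If $\|y\|=\delta$, then $$\|x\|^2\le 2\operatorname{Re}\langle x,y\rangle\le 2|\langle x,y\rangle|,$$ and the constant $2$ is best possible in both inequalities. That is, for every $c<2$ there exist such $H,x,y,\delta$ with $\|x-y\|\le\delta=\|y\|$ and $\|x\|^2>c\operatorname{Re}\langle x,y\rangle$, and likewise with $\|x\|^2>c|\langle x,y\rangle|$. (c) If $\|y\|<\delta$, then $$\|x\|^2\le \delta^2-\|y\|^2+2\operatorname{Re}\langle x,y\rangle\le \delta^2-\|y\|^2+2|\langle x,y\rangle|,$$ and the constant $2$ is best possible. That is, for every $c<2$ there exist such $H,x,y,\delta$ with $\|x-y\|\le\delta$, $\|y\|<\delta$ and $\|x\|^2>\delta^2-\|y\|^2+c\operatorname{Re}\langle x,y\rangle$, and likewise with $c|\langle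 x,y\rangle|$ in place of $c\operatorname{Re}\langle x,y\rangle$.
   Context: $\|u\|=\sqrt{\langle u,u\rangle}$ denotes the norm induced by the inner product. *)

(* Defs.v *)
From HB Require Import structures.
From mathcomp Require Import all_boot all_order all_algebra.
From mathcomp Require Import all_reals.
From mathcomp Require Import complex.
Set Implicit Arguments. Unset Strict Implicit. Unset Printing Implicit Defensive.
Import Order.TTheory GRing.Theory Num.Theory.
Local Open Scope ring_scope.

Inductive scalar_kind := RealK | ComplexK.

Definition scal (R : realType) (k : scalar_kind) : numFieldType :=
  match k with RealK => R | ComplexK => (R[i] : numFieldType) end.

Definition conjK (R : realType) (k : scalar_kind) : scal R k -> scal R k :=
  match k return scal R k -> scal R k with
  | RealK => fun z => z
  | ComplexK => fun z : R[i] => (z^*)%R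
  end.

Definition ReK (R : realType) (k : scalar_kind) : scal R k -> R :=
  match k return scal R k -> R with
  | RealK => fun z => z
  | ComplexK => fun z : R[i] => complex.Re z
  end.

Definition absK (R : realType) (k : scalar_kind) (z : scal R k) : R :=
  ReK `|z|.

Record inner_product_space (R : realType) (k : scalar_kind) := IPS {
  ips_car :> lmodType (scal R k);
  inner : ips_car -> ips_car -> scal R k;
  inner_linear : forall (a : scal R k) (x y z : ips_car),
      inner (a *: x + y) z = a * inner x z + inner y z;
  inner_conj_sym : forall x y : ips_car, inner y x = conjK (inner x y);
  inner_ge0 : forall x : ips_car, 0 <= inner x x;
  inner_eq0 : forall x : ips_car, inner x x = 0 -> x = 0
}.

Definition ipnorm (R : realType) (k : scalar_kind)
  (H : inner_product_space R k) (u : H) : R :=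
  Num.sqrt (ReK (inner u u)).

(* Main.v *)
Require Import Defs.
From HB Require Import structures.
From mathcomp Require Import ring lra.
From mathcomp Require Import all_boot all_order all_algebra.
From mathcomp Require Import all_reals.
From mathcomp Require Import complex.
Import Order.TTheory GRing.Theory Num.Theory.
Local Open Scope ring_scope.
Section S. Variable R : realType.
Implicit Types (k : scalar_kind).
Lemma conjKD k (a b : scal R k) : conjK (a + b) = conjK a + conjK b.
Proof. case: k a b => //= a b; exact: rmorphD. Qed.
Lemma conjKM k (a b : scal R k) : conjK (a * b) = conjK a * conjK b.
Proof. case: k a b => //= a b; exact: rmorphM. Qed.
Lemma conjKK k (a : scal R k) : conjK (conjK a) = a.
Proof. case: k a => //= a; exact: conjCK. Qed.
Lemma conjK_ge0 k (a : scal R k) : 0 <= a -> conjK a = a.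
Proof. case: k a => //= a; exact: geC0_conj. Qed.
Lemma ReKD k (a b : scal R k) : ReK (a + b) = ReK a + ReK b.
Proof. case: k a b => //= -[a1 a2] [b1 b2]. by []. Qed.
Lemma ReKN k (a : scal R k) : ReK (- a) = - ReK a.
Proof. case: k a => //= -[a1 a2]. by []. Qed.
Lemma ReK_conj k (a : scal R k) : ReK (conjK a) = ReK a.
Proof. case: k a => //= -[a1 a2]. by []. Qed.
Lemma ReK_ge0 k (a : scal R k) : 0 <= a -> 0 <= ReK a.
Proof. case: k a => //= -[a1 a2]. rewrite lecE /=. by case/andP. Qed.
Lemma ReKM_ge0 k (a b : scal R k) : 0 <= a -> ReK (a * b) = ReK a * ReK b.
Proof. case: k a b => //= -[a1 a2] [b1 b2]. rewrite lecE /= => /andP[/eqP -> _].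
 by simpc. Qed.
Lemma absK_sq k (a : scal R k) : ReK (conjK a * a) = absK a ^+ 2.
Proof. case: k a => /= [a|[a1 a2]]; rewrite /absK /=.
  by rewrite real_normK ?num_real // expr2.
by rewrite sqr_sqrtr ?addr_ge0 ?sqr_ge0 // mulNr opprK !expr2. Qed.
Lemma absK_ge0 k (a : scal R k) : 0 <= absK a.
Proof. case: k a => /= [a|[a1 a2]]; rewrite /absK /= //. exact: sqrtr_ge0. Qed.
Lemma ReK_le_absK k (a : scal R k) : ReK a <= absK a.
Proof. case: k a => /= [a|[a1 a2]]; rewrite /absK /=; first exact: ler_norm.
idtac. apply: le_trans (ler_norm a1) _. rewrite -sqrtr_sqr.
by rewrite ler_wsqrtr // lerDl sqr_ge0. Qed.
Lemma ReK_sq_le_absK k (a : scal R k) : ReK a ^+ 2 <= absK a ^+ 2.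
Proof. case: k a => /= [a|[a1 a2]]; rewrite /absK /=; first by rewrite real_normK ?num_real.
rewrite sqr_sqrtr ?addr_ge0 ?sqr_ge0 //. by rewrite lerDl sqr_ge0. Qed.
Lemma mulK_conj_ge0 k (a : scal R k) : 0 <= a * conjK a.
Proof. case: k a => /= a; [exact: mulr_ge0_le0 || by rewrite -expr2 sqr_ge0 | exact: mul_conjC_ge0]. Qed.
Lemma mulK_conj_eq0 k (a : scal R k) : a * conjK a = 0 -> a = 0.
Proof. case: k a => /= a /eqP; [by rewrite mulf_eq0 orbb => /eqP | by rewrite mul_conjC_eq0 => /eqP]. Qed.
Lemma conjK_nat k n : conjK (n%:R : scal R k) = n%:R.
Proof. by apply: conjK_ge0; rewrite ler0n. Qed.
Lemma absKN k (a : scal R k) : absK (- a) = absK a.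
Proof. by rewrite /absK normrN. Qed.
Lemma ReK_nat k n : ReK (n%:R : scal R k) = n%:R.
Proof. elim: n => [|n IH]; first by case: k.
rewrite -addn1 natrD ReKD IH natrD; congr (_ + _); by clear IH; case: k. Qed.
Lemma absK_nat k n : absK (n%:R : scal R k) = n%:R.
Proof. by rewrite /absK normr_nat ReK_nat. Qed.
Lemma conjKN1 k : conjK (-1 : scal R k) = -1.
Proof. case: k => //=. exact: rmorphN1. Qed.
End S.

Section IP.
Variables (R : realType) (k : scalar_kind) (H : inner_product_space R k).
Implicit Types x y z : H.
Lemma innerD x y z : inner (x + y) z = inner x z + inner y z.
Proof. by have := inner_linear 1 x y z; rewrite scale1r mul1r. Qed.
Lemma inner0l z : inner 0 z = 0.
Proof. have h := innerD 0 0 z; rewrite addr0 in h.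
by apply: (addrI (inner 0 z)); rewrite -h addr0. Qed.
Lemma innerZ a x z : inner (a *: x) z = a * inner x z.
Proof. by have := inner_linear a x 0 z; rewrite addr0 inner0l addr0. Qed.
Lemma innerN x z : inner (- x) z = - inner x z.
Proof. by rewrite -scaleN1r innerZ mulN1r. Qed.
Lemma innerB x y z : inner (x - y) z = inner x z - inner y z.
Proof. by rewrite innerD innerN. Qed.
Lemma innerDr x y z : inner z (x + y) = inner z x + inner z y.
Proof. by rewrite (inner_conj_sym (x + y)) innerD conjKD -!inner_conj_sym. Qed.
Lemma innerZr a x z : inner z (a *: x) = conjK a * inner z x.
Proof. by rewrite (inner_conj_sym (a *: x)) innerZ conjKM -!inner_conj_sym. Qed.
Lemma innerNr x z : inner z (- x) = - inner z x.
Proof. by rewrite -scaleN1r innerZr conjKN1 mulN1r. Qed.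
Lemma innerBr x y z : inner z (x - y) = inner z x - inner z y.
Proof. by rewrite innerDr innerNr. Qed.
Lemma cs x y : y <> 0 ->
  absK (inner x y) ^+ 2 <= ReK (inner x x) * ReK (inner y y).
Proof.
move=> y0.
have B0 : 0 < inner y y.
  rewrite lt_def inner_ge0 andbT; apply/eqP => /inner_eq0; exact: y0.
set A := inner x x; set B := inner y y; set z := inner x y.
pose v := B *: x - z *: y.
have e1 : inner x v = B * A - conjK z * z.
  by rewrite /v innerBr !innerZr conjK_ge0 ?ltW.
have e2 : inner y v = 0.
  rewrite /v innerBr !innerZr conjK_ge0 ?ltW // (inner_conj_sym x y) -/z.
  by rewrite mulrC subrr.
have e3 : inner v v = B * (B * A - conjK z * z).
  by rewrite {1}/v innerB !innerZ e1 e2 mulr0 subr0.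
have : 0 <= B * A - conjK z * z.
  by rewrite -(pmulr_rge0 _ B0) -e3 inner_ge0.
move=> /ReK_ge0; rewrite ReKD ReKN (@ReKM_ge0 _ _ _ _ (ltW B0)) (@absK_sq _ _ z) subr_ge0.
by rewrite mulrC.
Qed.
Lemma ipnorm_sq x : ipnorm x ^+ 2 = ReK (inner x x).
Proof. by rewrite /ipnorm sqr_sqrtr // ReK_ge0 // inner_ge0. Qed.
Lemma ipnorm_ge0 x : 0 <= ipnorm x.
Proof. exact: sqrtr_ge0. Qed.
Lemma ReK_sub x y : ReK (inner (x - y) (x - y)) =
  ReK (inner x x) + ReK (inner y y) - 2 * ReK (inner x y).
Proof.
rewrite innerB !innerBr !(ReKD, ReKN) (inner_conj_sym x y) ReK_conj.
by rewrite mulr2n mulrDl mul1r; lra.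
Qed.
End IP.

Lemma part1 (R : realType) (k : scalar_kind) :
  (forall (H : inner_product_space R k) (x y : H) (delta : R),
     x <> 0 -> y <> 0 -> 0 < delta -> ipnorm (x - y) <= delta ->
     (delta < ipnorm y ->
        0 <= ipnorm x ^+ 2 * ipnorm y ^+ 2 - absK (inner x y) ^+ 2 /\
        ipnorm x ^+ 2 * ipnorm y ^+ 2 - absK (inner x y) ^+ 2
          <= ipnorm x ^+ 2 * ipnorm y ^+ 2 - ReK (inner x y) ^+ 2 /\
        ipnorm x ^+ 2 * ipnorm y ^+ 2 - ReK (inner x y) ^+ 2
          <= delta ^+ 2 * ipnorm x ^+ 2) /\
     (ipnorm y = delta ->
        ipnorm x ^+ 2 <= 2 * ReK (inner x y) /\
        2 * ReK (inner x y) <= 2 * absK (inner x y)) /\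
     (ipnorm y < delta ->
        ipnorm x ^+ 2 <= delta ^+ 2 - ipnorm y ^+ 2 + 2 * ReK (inner x y) /\
        delta ^+ 2 - ipnorm y ^+ 2 + 2 * ReK (inner x y)
          <= delta ^+ 2 - ipnorm y ^+ 2 + 2 * absK (inner x y))).
Proof.
move=> H x y d x0 y0 d0 hxy.
have CS := @cs _ _ _ x _ y0.
have RA := @ReK_le_absK _ _ (inner x y).
have RA2 := @ReK_sq_le_absK _ _ (inner x y).
have ny0 := @ipnorm_ge0 _ _ _ y.
have nxy0 := @ipnorm_ge0 _ _ _ (x - y).
have hd : ipnorm (x - y) ^+ 2 <= d ^+ 2 by rewrite lerXn2r // nnegrE ltW.
rewrite ipnorm_sq ReK_sub in hd.
have ey := @ipnorm_sq _ _ _ y; rewrite -ey in CS hd.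
rewrite (@ipnorm_sq _ _ _ x).
set a2 := ReK (inner x x) in CS hd *; set n := ipnorm y in CS hd *.
set r := ReK (inner x y) in RA RA2 hd *; set s := absK (inner x y) in RA RA2 CS *.
have a20 : 0 <= a2 by rewrite /a2 -ipnorm_sq sqr_ge0.
split; [|split].
- move=> hn; split; [|split]; first by lra.
  + by lra.
  + have hb : d ^+ 2 < n ^+ 2 by nra.
    have h2r : a2 + (n ^+ 2 - d ^+ 2) <= 2 * r by lra.
    have : (a2 + (n ^+ 2 - d ^+ 2)) ^+ 2 <= (2 * r) ^+ 2.
      by nra.
    have q : 0 <= (a2 - (n ^+ 2 - d ^+ 2)) ^+ 2 by exact: sqr_ge0.
    move=> hsq.
    have : 4 * (a2 * n ^+ 2 - r ^+ 2) <= 4 * (d ^+ 2 * a2).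
      rewrite !expr2 in hsq q *; nra.
    by lra.
- by move=> hn; rewrite -hn in hd; split; lra.
- by move=> hn; split; lra.
Qed.

Section Ex.
Variables (R : realType) (k : scalar_kind).
Local Notation K := (scal R k).
Definition inner2 (u v : 'rV[K]_2) : K :=
  u ord0 ord0 * conjK (v ord0 ord0) + u ord0 ord_max * conjK (v ord0 ord_max).

Lemma inner2_linear (a : K) (x y z : 'rV[K]_2) :
  inner2 (a *: x + y) z = a * inner2 x z + inner2 y z.
Proof. rewrite /inner2 !mxE. ring. Qed.
Lemma inner2_conj_sym (x y : 'rV[K]_2) : inner2 y x = conjK (inner2 x y).
Proof. rewrite /inner2 conjKD !conjKM !conjKK. ring. Qed.
Lemma inner2_ge0 (x : 'rV[K]_2) : 0 <= inner2 x x.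
Proof. by rewrite /inner2 addr_ge0 // mulK_conj_ge0. Qed.
Lemma inner2_eq0 (x : 'rV[K]_2) : inner2 x x = 0 -> x = 0.
Proof.
move=> /eqP; rewrite /inner2 paddr_eq0 ?mulK_conj_ge0 // => /andP[/eqP h1 /eqP h2].
apply/matrixP => i j; rewrite mxE (ord1 i).
case: j => [[|[|//]] hj].
- have -> : Ordinal hj = ord0 by exact: val_inj.
  by rewrite (@mulK_conj_eq0 _ _ _ h1).
- have -> : Ordinal hj = ord_max by exact: val_inj.
  by rewrite (@mulK_conj_eq0 _ _ _ h2).
Qed.

Definition H2 : inner_product_space R k :=
  @IPS R k 'rV[K]_2 inner2 inner2_linear inner2_conj_sym inner2_ge0 inner2_eq0.

Definition vec (a b : K) : H2 := \row_(j < 2) (if j == ord0 then a else b).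

Lemma inner_vec a b c d : inner (vec a b) (vec c d) = a * conjK c + b * conjK d.
Proof. by rewrite /= /inner2 !mxE. Qed.
Lemma vecB a b c d : vec a b - vec c d = vec (a - c) (b - d).
Proof. by apply/matrixP => i j; rewrite !mxE; case: ifP. Qed.
Lemma ipnorm_vec a b : ipnorm (vec a b) = Num.sqrt (absK a ^+ 2 + absK b ^+ 2).
Proof. by rewrite /ipnorm inner_vec ReKD -!absK_sq ![conjK _ * _]mulrC. Qed.
Lemma absK0 : absK (0 : K) = 0. Proof. exact: (absK_nat R k 0). Qed.
Lemma absK1 : absK (1 : K) = 1. Proof. exact: (absK_nat R k 1). Qed.
Lemma ReK1 : ReK (1 : K) = 1. Proof. exact: (ReK_nat R k 1). Qed.
Lemma conjK1 : conjK (1 : K) = 1. Proof. exact: (conjK_nat R k 1). Qed.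
Lemma conjK0 : conjK (0 : K) = 0. Proof. exact: (conjK_nat R k 0). Qed.
Lemma vec_neq0 a b : a != 0 -> vec a b <> 0.
Proof. move=> /negP a0 /matrixP /(_ ord0 ord0); rewrite !mxE eqxx => h; apply: a0; by rewrite h. Qed.
End Ex.
Arguments vec {R k}. Arguments vec_neq0 {R k}. Arguments absK0 {R k}. Arguments absK1 {R k}.
Arguments ReK1 {R k}. Arguments conjK1 {R k}. Arguments conjK0 {R k}. Arguments inner_vec {R k}.
Arguments vecB {R k}. Arguments ipnorm_vec {R k}.

Theorem theorem1 (R : realType) (k : scalar_kind) :
  (* the inequalities (a), (b), (c) *)
  (forall (H : inner_product_space R k) (x y : H) (delta : R),
     x <> 0 -> y <> 0 -> 0 < delta -> ipnorm (x - y) <= delta ->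
     (delta < ipnorm y ->
        0 <= ipnorm x ^+ 2 * ipnorm y ^+ 2 - absK (inner x y) ^+ 2 /\
        ipnorm x ^+ 2 * ipnorm y ^+ 2 - absK (inner x y) ^+ 2
          <= ipnorm x ^+ 2 * ipnorm y ^+ 2 - ReK (inner x y) ^+ 2 /\
        ipnorm x ^+ 2 * ipnorm y ^+ 2 - ReK (inner x y) ^+ 2
          <= delta ^+ 2 * ipnorm x ^+ 2) /\
     (ipnorm y = delta ->
        ipnorm x ^+ 2 <= 2 * ReK (inner x y) /\
        2 * ReK (inner x y) <= 2 * absK (inner x y)) /\
     (ipnorm y < delta ->
        ipnorm x ^+ 2 <= delta ^+ 2 - ipnorm y ^+ 2 + 2 * ReK (inner x y) /\
        delta ^+ 2 - ipnorm y ^+ 2 + 2 * ReK (inner x y)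
          <= delta ^+ 2 - ipnorm y ^+ 2 + 2 * absK (inner x y)))
  /\
  (* (a): the constant 1 is best possible *)
  (forall c : R, 0 < c < 1 ->
     exists (H : inner_product_space R k) (x y : H) (delta : R),
       [/\ x <> 0, y <> 0, 0 < delta, ipnorm (x - y) <= delta /\
           delta < ipnorm y &
           ipnorm x ^+ 2 * ipnorm y ^+ 2 - ReK (inner x y) ^+ 2
             > c * delta ^+ 2 * ipnorm x ^+ 2])
  /\
  (* (b): the constant 2 is best possible in both inequalities *)
  (forall c : R, c < 2 ->
     (exists (H : inner_product_space R k) (x y : H) (delta : R),
       [/\ x <> 0, y <> 0, 0 < delta, ipnorm (x - y) <= delta /\
           ipnorm y = delta &
           ipnorm x ^+ 2 > c * ReK (inner x y)]) /\
     (exists (H : inner_product_space R k) (x y : H) (delta : R),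
       [/\ x <> 0, y <> 0, 0 < delta, ipnorm (x - y) <= delta /\
           ipnorm y = delta &
           ipnorm x ^+ 2 > c * absK (inner x y)]))
  /\
  (* (c): the constant 2 is best possible *)
  (forall c : R, c < 2 ->
     (exists (H : inner_product_space R k) (x y : H) (delta : R),
       [/\ x <> 0, y <> 0, 0 < delta, ipnorm (x - y) <= delta /\
           ipnorm y < delta &
           ipnorm x ^+ 2 > delta ^+ 2 - ipnorm y ^+ 2 + c * ReK (inner x y)]) /\
     (exists (H : inner_product_space R k) (x y : H) (delta : R),
       [/\ x <> 0, y <> 0, 0 < delta, ipnorm (x - y) <= delta /\
           ipnorm y < delta &
           ipnorm x ^+ 2 > delta ^+ 2 - ipnorm y ^+ 2 + c * absK (inner x y)])).
Proof.
split; first exact: part1.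
have n1 : (1 : scal R k) != 0 by exact: oner_neq0.
have n2 : (2 : scal R k) != 0 by rewrite pnatr_eq0.
have e21 : (2 - 1 : scal R k) = 1 by ring.
split.
- move=> c /andP[c0 c1].
  exists (H2 R k), (vec 1 0), (vec 1 1), 1; split => //.
  + exact: vec_neq0.
  + exact: vec_neq0.
  + rewrite vecB subrr sub0r !ipnorm_vec absKN absK0 absK1 expr0n expr1n add0r sqrtr1.
    split => //. by rewrite -{1}sqrtr1 ltr_sqrt; lra.
  + rewrite !ipnorm_vec absK0 absK1 expr0n expr1n addr0 sqrtr1 sqr_sqrtr ?addr_ge0 //.
    rewrite inner_vec conjK1 mul0r addr0 mul1r ReK1; lra.
have nx : ipnorm (vec 2 0 : H2 R k) ^+ 2 = 4.
  rewrite ipnorm_vec absK0 expr0n addr0 (absK_nat R k 2) sqr_sqrtr ?sqr_ge0 //.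
  by rewrite expr2 -natrM.
have ny : ipnorm (vec 1 0 : H2 R k) = 1.
  by rewrite ipnorm_vec absK0 absK1 expr0n expr1n addr0 sqrtr1.
have nxy : ipnorm (vec 2 0 - vec 1 0 : H2 R k) = 1.
  by rewrite vecB e21 subrr ipnorm_vec absK0 absK1 expr0n expr1n addr0 sqrtr1.
have ip : inner (vec 2 0 : H2 R k) (vec 1 0) = 2.
  by rewrite inner_vec conjK1 mul0r addr0 mulr1.
have x0 : (vec 2 0 : H2 R k) <> 0 by exact: vec_neq0.
have y0 : (vec 1 0 : H2 R k) <> 0 by exact: vec_neq0.
split.
- move=> c c2; split; exists (H2 R k), (vec 2 0), (vec 1 0), 1; split => //;
    rewrite ?nx ?ny ?nxy ?ip ?ReK_nat ?absK_nat //; lra.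
- move=> c c2.
  have d0 : 0 < Num.sqrt (3 - c) by rewrite sqrtr_gt0; lra.
  have sd : Num.sqrt (3 - c) ^+ 2 = 3 - c by rewrite sqr_sqrtr //; lra.
  have h1 : 1 <= Num.sqrt (3 - c) by rewrite -{1}sqrtr1 ler_wsqrtr //; lra.
  have h2 : 1 < Num.sqrt (3 - c) by rewrite -{1}sqrtr1 ltr_sqrt; lra.
  split; exists (H2 R k), (vec 2 0), (vec 1 0), (Num.sqrt (3 - c)); split => //;
    rewrite ?nx ?ny ?nxy ?ip ?sd ?ReK_nat ?absK_nat //; lra.
Qed.
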